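(* Let $\lambda$ be an infinite cardinal with $\lambda=\lambda^{\aleph_0}>|R|$, let $T$ be the set of all finite sequences $\tau\colon n\to\lambda$ ($n\in\omega$), and let $E=\bigoplus_{\tau\in T}R\tau$ be the free $R$-module with basis $T$. Let $H$ be a cotorsion-free $R$-module of cardinality less than $\lambda$, let $\widehat E$, $\widehat H$ be the $\mathbb S$-adic completions and $\widehat B=\widehat E\oplus\widehat H$, and let $\pi\colon\widehat B\to\widehat H$ be the canonical projection with kernel $\widehat E$. Let $H'\subseteq H$ be a pure submodule, $E'$ a direct summand of $E$, and let $\varphi\colon\mathrm{Dom}(\varphi)\to\widehat E\oplus H$ be an $R$-homomorphism defined on a submodule $\mathrm{Dom}(\varphi)$ with $E'\subseteq\mathrm{Dom}(\varphi)\subseteq\widehat E\oplus H'$, both inclusions pure, and $\pi(\mathrm{Dom}(\varphi))=H'$. Then $\varphi$ has a unique extension to an $R$-homomorphism $\widehat\varphi\colon\widehat{E'}\oplus H'\to\widehat E\oplus\widehat H=\widehat B$.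
   Context: Standing setting: $R$ is a commutative ring with $1$ with a distinguished countable multiplicatively closed subset $\mathbb S=\{s_n:n\in\omega\}$ such that $R$ is $\mathbb S$-reduced and $\mathbb S$-torsion-free and cotorsion-free. $\widehat R$ and $\widehat M$ denote $\mathbb S$-adic completions (topology with neighbourhoods of zero $q_mM$, $q_m=\prod_{n<m}s_n$). An $R$-module $M$ is cotorsion-free if $\mathrm{Hom}_R(\widehat R,M)=0$. A submodule $N\subseteq M$ is pure if $sM\cap N=sN$ for all $s\in\mathbb S$. *)

(* Defs.v *)
From mathcomp Require Import all_boot all_order all_algebra.
Set Implicit Arguments. Unset Strict Implicit. Unset Printing Implicit Defensive.
Import GRing.Theory.
Local Open Scope ring_scope.

(* Setting: R commutative ring, S = {s n : n in nat} countable, multiplic-   *)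
(* atively closed.  q m = prod_{n<m} s n.  The S-adic completion of a module *)
(* M is represented (Bishop/setoid style) by S-adic Cauchy sequences         *)
(* nat -> M modulo the relation [ceq] of having S-adic limit-difference 0;   *)
(* this is exactly the inverse limit  lim M / q_m M.                          *)

Section SadicDefs.
Variables (R : comPzRingType) (s : nat -> R).

Definition qS (m : nat) : R := \prod_(n < m) s n.

Definition mult_closed_seq : Prop :=
  (exists n, s n = 1) /\ (forall n m, exists k, s n * s m = s k).

Definition S_torsion_free (M : lmodType R) : Prop :=
  forall n (x : M), s n *: x = 0 -> x = 0.

Definition S_reduced (M : lmodType R) : Prop :=
  forall x : M, (forall n, exists y, x = s n *: y) -> x = 0.

Definition is_submod (M : lmodType R) (P : M -> Prop) : Prop :=
  P 0 /\ (forall x y, P x -> P y -> P (x + y)) /\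
  (forall (r : R) x, P x -> P (r *: x)).

Definition pure_submod (M : lmodType R) (N : M -> Prop) : Prop :=
  is_submod N /\
  forall n (x : M), N x -> (exists y : M, x = s n *: y) ->
    exists y, N y /\ x = s n *: y.

Definition direct_summand (M : lmodType R) (P : M -> Prop) : Prop :=
  is_submod P /\ exists Q : M -> Prop, is_submod Q /\
    (forall x, P x -> Q x -> x = 0) /\
    (forall x, exists a b, P a /\ Q b /\ x = a + b).

Definition in_qM (M : lmodType R) (k : nat) (x : M) : Prop :=
  exists y : M, x = qS k *: y.

Definition cauchy (M : lmodType R) (x : nat -> M) : Prop :=
  forall k, exists N, forall n m, (N <= n)%N -> (N <= m)%N -> in_qM k (x n - x m).

Definition ceq (M : lmodType R) (x y : nat -> M) : Prop :=
  forall k, exists N, forall n, (N <= n)%N -> in_qM k (x n - y n).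

Definition sadd (M : lmodType R) (x y : nat -> M) : nat -> M := fun n => x n + y n.
Definition sscale (M : lmodType R) (r : R) (x : nat -> M) : nat -> M := fun n => r *: x n.
Definition sconst (M : lmodType R) (m : M) : nat -> M := fun _ => m.

Definition csubmod (M : lmodType R) (D : (nat -> M) -> Prop) : Prop :=
  (forall x, D x -> cauchy x) /\
  (forall x y, D x -> cauchy y -> ceq x y -> D y) /\
  D (sconst 0) /\
  (forall x y, D x -> D y -> D (sadd x y)) /\
  (forall r x, D x -> D (sscale r x)).

Definition chom (M N : lmodType R) (D : (nat -> M) -> Prop)
  (f : (nat -> M) -> (nat -> N)) : Prop :=
  (forall x, D x -> cauchy (f x)) /\
  (forall x y, D x -> D y -> ceq x y -> ceq (f x) (f y)) /\
  (forall x y, D x -> D y -> ceq (f (sadd x y)) (sadd (f x) (f y))) /\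
  (forall r x, D x -> ceq (f (sscale r x)) (sscale r (f x))).

Definition cotorsion_free (M : lmodType R) : Prop :=
  forall f : (nat -> R^o) -> M,
    (forall x y, cauchy x -> cauchy y -> ceq x y -> f x = f y) ->
    (forall x y, cauchy x -> cauchy y -> f (sadd x y) = f x + f y) ->
    (forall r x, cauchy x -> f (sscale r x) = r *: f x) ->
    forall x, cauchy x -> f x = 0.

End SadicDefs.

Definition free_basis (R : comPzRingType) (E : lmodType R) (T : eqType)
  (b : T -> E) : Prop :=
  (forall x : E, exists r : seq (R * T), x = \sum_(p <- r) p.1 *: b p.2) /\
  (forall (ts : seq T) (c : T -> R), uniq ts ->
     \sum_(t <- ts) c t *: b t = 0 -> forall t, t \in ts -> c t = 0).

Definition card_lt (A B : Type) : Prop :=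
  (exists f : A -> B, injective f) /\ ~ (exists g : B -> A, injective g).

(* Main.v *)
Require Import Defs.
From mathcomp Require Import all_boot all_order all_algebra.
From Stdlib Require Import ClassicalEpsilon.
From mathcomp Require Import zify.
Import GRing.Theory.
Local Open Scope ring_scope.
Set Implicit Arguments. Unset Strict Implicit.

Lemma choice_nat (A B : Type) (P : A -> B -> Prop) :
  (forall a, exists b, P a b) -> exists f : A -> B, forall a, P a (f a).
Proof.
move=> h; exists (fun a => proj1_sig (constructive_indefinite_description _ (h a))).
by move=> a; case: (constructive_indefinite_description _ (h a)).
Qed.

Lemma zm_tri (V : zmodType) (a b c d : V) : a - b = (a - c) + (c - d) - (b - d).
Proof. by rewrite opprB !addrA !subrK. Qed.
Lemma zm_L4 (V : zmodType) (a b c d : V) : a - d = (a - b) + (b - c) + (c - d).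
Proof. by rewrite !addrA !subrK. Qed.
Lemma zm_L3 (V : zmodType) (a b : V) : b = a - (a - b).
Proof. by rewrite opprB addrC subrK. Qed.
Lemma zm_L2 (V : zmodType) (a b c : V) : a - c = (a - b) + (b - c).
Proof. by rewrite addrA subrK. Qed.

Section Gen.
Variables (R : comPzRingType) (s : nat -> R).
Local Notation q := (qS s).

Lemma qSS k : q k.+1 = q k * s k.
Proof. by rewrite /qS big_ord_recr. Qed.

Lemma qS_dvd j k : (j <= k)%N -> exists c, q k = q j * c.
Proof.
elim: k => [|k IH] hjk.
  by move: hjk; rewrite leqn0 => /eqP ->; exists 1; rewrite mulr1.
case: (leqP j k) => h.
  by case: (IH h) => c hc; exists (c * s k); rewrite qSS hc mulrA.
have -> : j = k.+1 by apply/eqP; rewrite eqn_leq hjk h.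
by exists 1; rewrite mulr1.
Qed.

Lemma qS_in_S (hS : mult_closed_seq s) k : exists m, q k = s m.
Proof.
case: hS => [[n0 h0] hm]; elim: k => [|k [m hm']].
  by exists n0; rewrite h0 /qS big_ord0.
by rewrite qSS hm'; apply: hm.
Qed.

Section M.
Variable M : lmodType R.
Implicit Types (x y : M) (u v w : nat -> M).

Lemma in_qM0 k : in_qM s k (0 : M).
Proof. by exists 0; rewrite scaler0. Qed.
Lemma in_qMD k x y : in_qM s k x -> in_qM s k y -> in_qM s k (x + y).
Proof. by move=> [a ->] [b ->]; exists (a + b); rewrite scalerDr. Qed.
Lemma in_qMZ k r x : in_qM s k x -> in_qM s k (r *: x).
Proof. by move=> [a ->]; exists (r *: a); rewrite !scalerA mulrC. Qed.
Lemma in_qMN k x : in_qM s k x -> in_qM s k (- x).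
Proof. by move=> [a ->]; exists (- a); rewrite scalerN. Qed.
Lemma in_qMB k x y : in_qM s k x -> in_qM s k y -> in_qM s k (x - y).
Proof. by move=> hx hy; apply: in_qMD => //; apply: in_qMN. Qed.
Lemma in_qM_le j k x : (j <= k)%N -> in_qM s k x -> in_qM s j x.
Proof.
by move=> /qS_dvd [c hc] [a ->]; exists (c *: a); rewrite hc scalerA.
Qed.
Lemma in_qM_q k x : in_qM s k (q k *: x).
Proof. by exists x. Qed.

Definition evq k u := exists N, forall n, (N <= n)%N -> in_qM s k (u n).
Definition ssub u v := sadd u (sscale (-1) v).
Lemma ssubE u v n : ssub u v n = u n - v n.
Proof. by rewrite /ssub /sadd /sscale scaleN1r. Qed.

Lemma evqD k u v : evq k u -> evq k v -> evq k (fun n => u n + v n).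
Proof.
move=> [N1 h1] [N2 h2]; exists (maxn N1 N2) => n hn.
by apply: in_qMD; [apply: h1|apply: h2]; apply: leq_trans hn; rewrite ?leq_maxl ?leq_maxr.
Qed.
Lemma evqZ k r u : evq k u -> evq k (fun n => r *: u n).
Proof. by move=> [N h]; exists N => n hn; apply: in_qMZ; apply: h. Qed.
Lemma evqN k u : evq k u -> evq k (fun n => - u n).
Proof. by move=> [N h]; exists N => n hn; apply: in_qMN; apply: h. Qed.
Lemma evq_ext k u v : (forall n, u n = v n) -> evq k u -> evq k v.
Proof. by move=> e [N h]; exists N => n hn; rewrite -e; apply: h. Qed.
Lemma evq_le j k u : (j <= k)%N -> evq k u -> evq j u.
Proof. by move=> hjk [N h]; exists N => n hn; apply: in_qM_le hjk _; apply: h. Qed.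
Lemma evq_q k w : evq k (sscale (q k) w).
Proof. by exists 0%N => n _; apply: in_qM_q. Qed.

Lemma ceq_evq u v : ceq s u v <-> forall k, evq k (ssub u v).
Proof.
split=> h k; case: (h k) => N hN; exists N => n hn.
  by rewrite ssubE; apply: hN.
by rewrite -ssubE; apply: hN.
Qed.

Lemma ceq_refl u : ceq s u u.
Proof. by move=> k; exists 0%N => n _; rewrite subrr; apply: in_qM0. Qed.
Lemma ceq_sym u v : ceq s u v -> ceq s v u.
Proof.
move=> h k; case: (h k) => N hN; exists N => n hn.
by rewrite -opprB; apply: in_qMN; apply: hN.
Qed.
Lemma ceq_trans u v w : ceq s u v -> ceq s v w -> ceq s u w.
Proof.
move=> h1 h2 k; case: (h1 k) (h2 k) => N1 e1 [N2 e2]; exists (maxn N1 N2) => n hn.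
have -> : u n - w n = (u n - v n) + (v n - w n) by rewrite addrA subrK.
by apply: in_qMD; [apply: e1|apply: e2]; apply: leq_trans hn; rewrite ?leq_maxl ?leq_maxr.
Qed.
Lemma ceq_ev u v : (exists N, forall n, (N <= n)%N -> u n = v n) -> ceq s u v.
Proof.
by move=> [N h] k; exists N => n hn; rewrite h // subrr; apply: in_qM0.
Qed.
Lemma ceq_pt u v : (forall n, u n = v n) -> ceq s u v.
Proof. by move=> h; apply: ceq_ev; exists 0%N. Qed.
Lemma ceqD u u' v v' : ceq s u u' -> ceq s v v' -> ceq s (sadd u v) (sadd u' v').
Proof.
move=> h1 h2 k; case: (h1 k) (h2 k) => N1 e1 [N2 e2]; exists (maxn N1 N2) => n hn.
have -> : sadd u v n - sadd u' v' n = (u n - u' n) + (v n - v' n).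
  by rewrite /sadd opprD addrACA.
by apply: in_qMD; [apply: e1|apply: e2]; apply: leq_trans hn; rewrite ?leq_maxl ?leq_maxr.
Qed.
Lemma ceqZ r u u' : ceq s u u' -> ceq s (sscale r u) (sscale r u').
Proof.
move=> h k; case: (h k) => N e; exists N => n hn.
by rewrite /sscale -scalerBr; apply: in_qMZ; apply: e.
Qed.
Lemma ceq_ssub u u' v v' : ceq s u u' -> ceq s v v' -> ceq s (ssub u v) (ssub u' v').
Proof. by move=> h1 h2; apply: ceqD => //; apply: ceqZ. Qed.
Lemma evq_ceq k u v : evq k u -> ceq s u v -> evq k v.
Proof.
move=> [N1 e1] h; case: (h k) => N2 e2; exists (maxn N1 N2) => n hn.
have -> : v n = u n - (u n - v n) by rewrite opprB addrC subrK.
by apply: in_qMB; [apply: e1|apply: e2]; apply: leq_trans hn; rewrite ?leq_maxl ?leq_maxr.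
Qed.
Lemma ceq_scale_evq k u w : ceq s u (sscale (q k) w) -> evq k u.
Proof. by move=> h; apply: evq_ceq (evq_q k w) (ceq_sym h). Qed.

Lemma cauchy_const x : cauchy s (sconst x).
Proof. by move=> k; exists 0%N => n m _ _; rewrite /sconst subrr; apply: in_qM0. Qed.
Lemma cauchyD u v : cauchy s u -> cauchy s v -> cauchy s (sadd u v).
Proof.
move=> h1 h2 k; case: (h1 k) (h2 k) => N1 e1 [N2 e2]; exists (maxn N1 N2) => n m hn hm.
have -> : sadd u v n - sadd u v m = (u n - u m) + (v n - v m).
  by rewrite /sadd opprD addrACA.
have hn1 : (N1 <= n)%N by apply: leq_trans hn; rewrite leq_maxl.
have hm1 : (N1 <= m)%N by apply: leq_trans hm; rewrite leq_maxl.
have hn2 : (N2 <= n)%N by apply: leq_trans hn; rewrite leq_maxr.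
have hm2 : (N2 <= m)%N by apply: leq_trans hm; rewrite leq_maxr.
by apply: in_qMD; [apply: e1|apply: e2].
Qed.
Lemma cauchyZ r u : cauchy s u -> cauchy s (sscale r u).
Proof.
move=> h k; case: (h k) => N e; exists N => n m hn hm.
by rewrite /sscale -scalerBr; apply: in_qMZ; apply: e.
Qed.
Lemma cauchy_ceq u v : cauchy s u -> ceq s u v -> cauchy s v.
Proof.
move=> h1 h2 k; case: (h1 k) (h2 k) => N1 e1 [N2 e2]; exists (maxn N1 N2) => n m hn hm.
have hn1 : (N1 <= n)%N by apply: leq_trans hn; rewrite leq_maxl.
have hm1 : (N1 <= m)%N by apply: leq_trans hm; rewrite leq_maxl.
have hn2 : (N2 <= n)%N by apply: leq_trans hn; rewrite leq_maxr.
have hm2 : (N2 <= m)%N by apply: leq_trans hm; rewrite leq_maxr.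
rewrite (zm_tri _ _ (u n) (u m)).
apply: in_qMB; [apply: in_qMD|].
- by rewrite -opprB; apply: in_qMN; apply: e2.
- by apply: e1.
- by rewrite -opprB; apply: in_qMN; apply: e2.
Qed.

Lemma diag (f : nat -> nat -> M) :
  (forall k, cauchy s (f k)) ->
  (forall k, evq k (fun m => f k.+1 m - f k m)) ->
  exists v, cauchy s v /\ forall k, evq k (fun m => v m - f k m).
Proof.
move=> hc hd.
have [C hC] := choice_nat (fun k => hc k k).
have [D hD] := choice_nat hd.
pose Mx := fix Mx n := match n with 0 => (C 0 + D 0)%N | n'.+1 => (Mx n' + C n + D n)%N end.
have MC n : (C n <= Mx n)%N /\ (D n <= Mx n)%N.
  by case: n => [|n] /=; split; lia.
have Mmon i n : (i <= n)%N -> (Mx i <= Mx n)%N.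
  elim: n => [|n IH]; first by rewrite leqn0 => /eqP ->.
  rewrite leq_eqVlt => /orP [/eqP -> //| h]; apply: leq_trans (IH h) _ => /=; lia.
have tele k n : (k <= n)%N -> forall m, (Mx n <= m)%N -> in_qM s k (f n m - f k m).
  elim: n => [|n IH].
    by rewrite leqn0 => /eqP -> m _; rewrite subrr; apply: in_qM0.
  rewrite leq_eqVlt => /orP [/eqP -> m _| h m hm]; first by rewrite subrr; apply: in_qM0.
  have hkn : (k <= n)%N by [].
  have -> : f n.+1 m - f k m = (f n.+1 m - f n m) + (f n m - f k m) by rewrite addrA subrK.
  apply: in_qMD; last by apply: IH => //; apply: leq_trans hm; apply: Mmon.
  apply: in_qM_le hkn _; apply: hD.
  apply: leq_trans hm; apply: leq_trans (proj2 (MC n)) _; apply: Mmon; lia.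
pose v n := f n (Mx n).
have key k n : (k <= n)%N -> (C k <= n)%N -> in_qM s k (v n - f k n).
  move=> hkn hCn; pose m := maxn (Mx n) n.
  have hm1 : (Mx n <= m)%N by rewrite leq_maxl.
  have hm2 : (n <= m)%N by rewrite leq_maxr.
  have -> : v n - f k n = (f n (Mx n) - f n m) + (f n m - f k m) + (f k m - f k n).
    by rewrite /v -zm_L4.
  apply: in_qMD; first apply: in_qMD.
  - apply: in_qM_le hkn _; apply: hC; first by case: (MC n).
    by apply: leq_trans hm1; case: (MC n).
  - by apply: tele.
  - by apply: hC => //; apply: leq_trans hm2.
exists v; split.
  move=> k; exists (k + C k)%N => n m hn hm.
  rewrite (zm_tri _ _ (f k n) (f k m)).
  apply: in_qMB; first apply: in_qMD; try (apply: key; lia).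
  apply: hC; lia.
by move=> k; exists (k + C k)%N => n hn; apply: key; lia.
Qed.

End M.
End Gen.

Lemma zm_sub3 (V : zmodType) (a b c : V) : (a - c) - (b - c) = a - b.
Proof. by rewrite opprB addrA subrK. Qed.

Lemma zm_sub2 (V : zmodType) (x a b : V) : (x - b) - (x - a) = a - b.
Proof. by rewrite opprB addrC addrA subrK. Qed.

Section Pair.
Variables (R : comPzRingType) (s : nat -> R) (E H : lmodType R).
Implicit Types (x y : nat -> (E * H)%type).

Lemma in_qM_fst k (p : (E * H)%type) : in_qM s k p -> in_qM s k p.1.
Proof. by move=> [y ->]; exists y.1. Qed.
Lemma in_qM_snd k (p : (E * H)%type) : in_qM s k p -> in_qM s k p.2.
Proof. by move=> [y ->]; exists y.2. Qed.
Lemma in_qM_pair k (a : E) (b : H) : in_qM s k a -> in_qM s k b -> in_qM s k (a, b).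
Proof. by move=> [y ->] [z ->]; exists (y, z). Qed.

Lemma ceq_fst x y : ceq s x y -> ceq s (fun n => (x n).1) (fun n => (y n).1).
Proof. by move=> h k; case: (h k) => N e; exists N => n hn; apply: (in_qM_fst (e n hn)). Qed.
Lemma ceq_snd x y : ceq s x y -> ceq s (fun n => (x n).2) (fun n => (y n).2).
Proof. by move=> h k; case: (h k) => N e; exists N => n hn; apply: (in_qM_snd (e n hn)). Qed.
Lemma ceq_pair x y : ceq s (fun n => (x n).1) (fun n => (y n).1) ->
  ceq s (fun n => (x n).2) (fun n => (y n).2) -> ceq s x y.
Proof.
move=> h1 h2 k; case: (h1 k) (h2 k) => N1 e1 [N2 e2]; exists (maxn N1 N2) => n hn.
have -> : x n - y n = ((x n).1 - (y n).1, (x n).2 - (y n).2) by case: (x n); case: (y n).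
by apply: in_qM_pair; [apply: e1|apply: e2]; apply: leq_trans hn; rewrite ?leq_maxl ?leq_maxr.
Qed.
Lemma cauchy_fst x : cauchy s x -> cauchy s (fun n => (x n).1).
Proof. by move=> h k; case: (h k) => N e; exists N => n m hn hm; apply: (in_qM_fst (e n m hn hm)). Qed.
Lemma cauchy_snd x : cauchy s x -> cauchy s (fun n => (x n).2).
Proof. by move=> h k; case: (h k) => N e; exists N => n m hn hm; apply: (in_qM_snd (e n m hn hm)). Qed.
Lemma cauchy_pair x : cauchy s (fun n => (x n).1) -> cauchy s (fun n => (x n).2) -> cauchy s x.
Proof.
move=> h1 h2 k; case: (h1 k) (h2 k) => N1 e1 [N2 e2]; exists (maxn N1 N2) => n m hn hm.
have -> : x n - x m = ((x n).1 - (x m).1, (x n).2 - (x m).2) by case: (x n); case: (x m).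
have hn1 : (N1 <= n)%N by apply: leq_trans hn; rewrite leq_maxl.
have hm1 : (N1 <= m)%N by apply: leq_trans hm; rewrite leq_maxl.
have hn2 : (N2 <= n)%N by apply: leq_trans hn; rewrite leq_maxr.
have hm2 : (N2 <= m)%N by apply: leq_trans hm; rewrite leq_maxr.
by apply: in_qM_pair; [apply: e1|apply: e2].
Qed.
End Pair.

Lemma summand_pure (R : comPzRingType) (M : lmodType R) (P : M -> Prop) :
  direct_summand P -> forall (r : R) (e w : M), P e -> e = r *: w ->
  exists a, P a /\ e = r *: a.
Proof.
move=> [[P0 [PD PZ]] [Q [[Q0 [QD QZ]] [hPQ hdec]]]] r e w he ew.
case: (hdec w) => a [b [ha [hb ew']]]; rewrite ew' in ew.
exists a; split => //.
have : e - r *: a = r *: b.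
  by rewrite ew scalerDr addrC addKr.
move=> eq; have h0 : r *: b = 0.
  apply: hPQ; last by apply: QZ.
  by rewrite -eq -scaleN1r; apply: PD => //; apply PZ; apply PZ.
by move: eq; rewrite h0 => /eqP; rewrite subr_eq0 => /eqP.
Qed.

Lemma free_repr (R : comPzRingType) (E : lmodType R) (T : eqType) (b : T -> E)
  (r : seq (R * T)) : exists ts (c : T -> R), uniq ts /\
  \sum_(p <- r) p.1 *: b p.2 = \sum_(t <- ts) c t *: b t.
Proof.
elim: r => [|[a t] r [ts [c [hu he]]]].
  by exists [::], (fun _ => 0); rewrite !big_nil.
rewrite big_cons /= he.
case: (boolP (t \in ts)) => ht.
  exists ts, (fun u => if u == t then c t + a else c u); split => //.
  rewrite (bigD1_seq t ht hu) /= [RHS](bigD1_seq t ht hu) /= eqxx scalerDl.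
  rewrite addrA [a *: _ + _]addrC; congr (_ + _).
  by apply: eq_bigr => u /negPf ->.
exists (t :: ts), (fun u => if u == t then a else c u); split; first by rewrite /= ht.
rewrite big_cons eqxx; congr (_ + _).
rewrite !big_seq; apply: eq_bigr => u hu'.
by case: eqP => // eut; move: ht; rewrite -eut hu'.
Qed.

Lemma free_tf (R : comPzRingType) (s : nat -> R) (E : lmodType R) (T : eqType)
  (b : T -> E) : free_basis b -> S_torsion_free s R^o -> S_torsion_free s E.
Proof.
move=> [hspan hind] htf n x hx.
case: (hspan x) => r ex; case: (free_repr b r) => ts [c [hu e2]].
have hc : forall t, t \in ts -> s n * c t = 0.
  apply: (hind ts (fun t => s n * c t) hu).
  under eq_bigr do rewrite -scalerA.
  by rewrite -scaler_sumr -e2 -ex.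
have hc0 : forall t, t \in ts -> c t = 0 by move=> t ht; apply: (htf n); apply: hc.
rewrite ex e2 big_seq big1 // => t ht; by rewrite hc0 // scale0r.
Qed.

Section Main.
Variables (R : comPzRingType) (s : nat -> R).
Local Notation q := (qS s).
Variable (hS : mult_closed_seq s).
Variables (E H : lmodType R).
Variable (hEtf : S_torsion_free s E).
Variables (H' : H -> Prop) (hH' : is_submod H').
Variables (E' : E -> Prop) (hE' : direct_summand E').
Variables (Dom : (nat -> E * H) -> Prop) (hDom : csubmod s Dom).
Variable (hE'Dom : forall e, E' e -> Dom (sconst (e, 0))).
Variable (hDomEH' : forall d, Dom d ->
      exists h, H' h /\ ceq s (fun n => (d n).2) (sconst h)).
Variable (hDompure : forall n d, Dom d ->
      (exists x, cauchy s x /\ (exists h, H' h /\ ceq s (fun k => (x k).2) (sconst h))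
                 /\ ceq s d (sscale (s n) x)) ->
      exists d', Dom d' /\ ceq s d (sscale (s n) d')).
Variable (hpiDom : forall h, H' h -> exists d, Dom d /\ ceq s (fun n => (d n).2) (sconst h)).
Variable (hDomE'H' : forall d, Dom d ->
      exists y : nat -> E, (forall n, E' (y n)) /\ cauchy s y /\
                           ceq s (fun n => (d n).1) y).
Variables (phi : (nat -> E * H) -> (nat -> E * H)) (hphi : chom s Dom phi).

Definition EH := fun x : nat -> E * H =>
      cauchy s x /\
      (exists y : nat -> E, (forall n, E' (y n)) /\ cauchy s y /\
                            ceq s (fun n => (x n).1) y) /\
      (exists h, H' h /\ ceq s (fun n => (x n).2) (sconst h)).

Lemma E'0 : E' 0. Proof. by case: hE' => [[]]. Qed.
Lemma E'D a b : E' a -> E' b -> E' (a + b). Proof. by case: hE' => [[_ [h _]] _]; apply: h. Qed.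
Lemma E'Z r a : E' a -> E' (r *: a). Proof. by case: hE' => [[_ [_ h]] _]; apply: h. Qed.
Lemma H'0 : H' 0. Proof. by case: hH'. Qed.
Lemma H'D a b : H' a -> H' b -> H' (a + b). Proof. by case: hH' => _ [h _]; apply: h. Qed.
Lemma H'Z r a : H' a -> H' (r *: a). Proof. by case: hH' => _ [_ h]; apply: h. Qed.

Lemma DomD x y : Dom x -> Dom y -> Dom (sadd x y).
Proof. by case: hDom => _ [_ [_ [h _]]]; apply: h. Qed.
Lemma DomZ r x : Dom x -> Dom (sscale r x).
Proof. by case: hDom => _ [_ [_ [_ h]]]; apply: h. Qed.
Lemma DomB x y : Dom x -> Dom y -> Dom (ssub x y).
Proof. by move=> hx hy; apply: DomD => //; apply: DomZ. Qed.

Lemma phi_cauchy d : Dom d -> cauchy s (phi d).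
Proof. by case: hphi => h _; apply: h. Qed.
Lemma phi_resp x y : Dom x -> Dom y -> ceq s x y -> ceq s (phi x) (phi y).
Proof. by case: hphi => _ [h _]; apply: h. Qed.
Lemma phi_add x y : Dom x -> Dom y -> ceq s (phi (sadd x y)) (sadd (phi x) (phi y)).
Proof. by case: hphi => _ [_ [h _]]; apply: h. Qed.
Lemma phi_scale r x : Dom x -> ceq s (phi (sscale r x)) (sscale r (phi x)).
Proof. by case: hphi => _ [_ [_ h]]; apply: h. Qed.

Lemma chom_sub (D : (nat -> E * H) -> Prop) (f : (nat -> E * H) -> nat -> E * H) (x y : nat -> E * H) :
  chom s D f -> D x -> D (sscale (-1) y) -> D y ->
  ceq s (f (ssub x y)) (ssub (f x) (f y)).
Proof.
move=> [_ [_ [ha hsc]]] hx hy' hy.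
apply: ceq_trans (ha _ _ hx hy') _.
by apply: ceqD; [apply: ceq_refl | apply: hsc].
Qed.

Lemma EH_add x y : EH x -> EH y -> EH (sadd x y).
Proof.
move=> [cx [[y1 [h1 [c1 e1]]] [g1 [k1 f1]]]] [cy [[y2 [h2 [c2 e2]]] [g2 [k2 f2]]]].
split; first exact: cauchyD.
split.
  exists (sadd y1 y2); split; first by move=> n; apply: E'D.
  split; first exact: cauchyD.
  exact: (ceqD e1 e2).
exists (g1 + g2); split; first exact: H'D.
apply: ceq_trans (ceqD f1 f2) _; exact: ceq_refl.
Qed.

Lemma EH_scale r x : EH x -> EH (sscale r x).
Proof.
move=> [cx [[y1 [h1 [c1 e1]]] [g1 [k1 f1]]]].
split; first exact: cauchyZ.
split.
  exists (sscale r y1); split; first by move=> n; apply: E'Z.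
  split; first exact: cauchyZ.
  exact: (ceqZ r e1).
exists (r *: g1); split; first exact: H'Z.
apply: ceq_trans (ceqZ r f1) _; exact: ceq_refl.
Qed.

Lemma EH_sub x y : EH x -> EH y -> EH (ssub x y).
Proof. by move=> hx hy; apply: EH_add => //; apply: EH_scale. Qed.

Lemma EH_ceq x y : EH x -> ceq s x y -> EH y.
Proof.
move=> [cx [[y1 [h1 [c1 e1]]] [g1 [k1 f1]]]] e.
split; first exact: cauchy_ceq e.
split.
  exists y1; split => //; split => //.
  exact: ceq_trans (ceq_sym (ceq_fst e)) e1.
exists g1; split => //; exact: ceq_trans (ceq_sym (ceq_snd e)) f1.
Qed.

Lemma EH_Dom d : Dom d -> EH d.
Proof.
move=> hd; split; first by case: hDom => h _; apply: h.
by split; [apply: hDomE'H' | apply: hDomEH'].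
Qed.

Lemma EH_0 : EH (sconst 0).
Proof.
split; first exact: cauchy_const.
split.
  exists (sconst 0); split; first by move=> n; apply: E'0.
  by split; [apply: cauchy_const | apply: ceq_refl].
by exists 0; split; [apply: H'0 | apply: ceq_refl].
Qed.

Lemma key d d' z k : Dom d -> Dom d' -> EH z ->
  ceq s (ssub d d') (sscale (q k) z) -> evq s k (ssub (phi d) (phi d')).
Proof.
move=> hd hd' [cz [_ hz2]] e.
have [m hm] := qS_in_S hS k.
have hdd := DomB hd hd'.
rewrite hm in e.
have [d'' [hd'' e'']] := @hDompure m _ hdd (ex_intro _ z (conj cz (conj hz2 e))).
apply: (@ceq_scale_evq _ _ _ _ _ (phi d'')); rewrite hm.
apply: ceq_trans (ceq_sym (chom_sub hphi hd (DomZ _ hd') hd')) _.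
apply: ceq_trans (phi_resp hdd (DomZ _ hd'') e'') _.
exact: phi_scale.
Qed.

Definition Good (x v : nat -> E * H) :=
  cauchy s v /\ forall k, exists d, Dom d /\
    (exists z, EH z /\ ceq s (ssub x d) (sscale (q k) z)) /\
    evq s k (ssub v (phi d)).

Lemma Good_uniq x v w : Good x v -> Good x w -> ceq s v w.
Proof.
move=> [cv hv] [cw hw]; apply/ceq_evq => k.
case: (hv k) => d1 [hd1 [[z1 [hz1 e1]] ev1]].
case: (hw k) => d2 [hd2 [[z2 [hz2 e2]] ev2]].
have ev : evq s k (ssub (phi d1) (phi d2)).
  apply: (key hd1 hd2 (EH_sub hz2 hz1)).
  apply: ceq_trans (_ : ceq s _ (ssub (ssub x d2) (ssub x d1))) _.
    by apply: ceq_pt => n; rewrite !ssubE zm_sub2.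
  apply: ceq_trans (ceq_ssub e2 e1) _.
  by apply: ceq_pt => n; rewrite /sscale !ssubE -scalerBr.
apply: (@evq_ext _ _ _ _ (fun n => ssub v (phi d1) n + ssub (phi d1) (phi d2) n - ssub w (phi d2) n)).
  by move=> n; rewrite !ssubE -zm_tri.
apply: evqD; first exact: evqD.
exact: evqN.
Qed.

Lemma Good_ceq x y v : Good x v -> EH y -> ceq s x y -> Good y v.
Proof.
move=> [cv hv] hy e; split => // k.
case: (hv k) => d [hd [[z [hz e1]] ev]].
exists d; split => //; split => //; exists z; split => //.
apply: ceq_trans e1; apply: ceq_ssub; [exact: ceq_sym | exact: ceq_refl].
Qed.

Lemma Good_add x y v w : Good x v -> Good y w -> Good (sadd x y) (sadd v w).
Proof.
move=> [cv hv] [cw hw]; split; first exact: cauchyD.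
move=> k.
case: (hv k) => d1 [hd1 [[z1 [hz1 e1]] ev1]].
case: (hw k) => d2 [hd2 [[z2 [hz2 e2]] ev2]].
exists (sadd d1 d2); split; first exact: DomD.
split.
  exists (sadd z1 z2); split; first exact: EH_add.
  apply: ceq_trans (_ : ceq s _ (sadd (ssub x d1) (ssub y d2))) _.
    by apply: ceq_pt => n; rewrite /sadd !ssubE opprD addrACA.
  apply: ceq_trans (ceqD e1 e2) _.
  by apply: ceq_pt => n; rewrite /sadd /sscale scalerDr.
apply: evq_ceq (evqD ev1 ev2) _.
apply: ceq_trans (_ : ceq s _ (ssub (sadd v w) (sadd (phi d1) (phi d2)))) _.
  by apply: ceq_pt => n; rewrite /sadd !ssubE opprD addrACA.
apply: ceq_ssub; first exact: ceq_refl.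
exact: ceq_sym (phi_add hd1 hd2).
Qed.

Lemma Good_scale r x v : Good x v -> Good (sscale r x) (sscale r v).
Proof.
move=> [cv hv]; split; first exact: cauchyZ.
move=> k.
case: (hv k) => d1 [hd1 [[z1 [hz1 e1]] ev1]].
exists (sscale r d1); split; first exact: DomZ.
split.
  exists (sscale r z1); split; first exact: EH_scale.
  apply: ceq_trans (_ : ceq s _ (sscale r (ssub x d1))) _.
    by apply: ceq_pt => n; rewrite /sscale !ssubE scalerBr.
  apply: ceq_trans (ceqZ r e1) _.
  by apply: ceq_pt => n; rewrite /sscale !scalerA mulrC.
apply: evq_ceq (evqZ r ev1) _.
apply: ceq_trans (_ : ceq s _ (ssub (sscale r v) (sscale r (phi d1)))) _.
  by apply: ceq_pt => n; rewrite /sscale !ssubE scalerBr.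
apply: ceq_ssub; first exact: ceq_refl.
exact: ceq_sym (phi_scale r hd1).
Qed.

Lemma Good_Dom d : Dom d -> Good d (phi d).
Proof.
move=> hd; split; first exact: phi_cauchy.
move=> k; exists d; split => //; split.
  exists (sconst 0); split; first exact: EH_0.
  by apply: ceq_pt => n; rewrite ssubE /sscale /sconst subrr scaler0.
by exists 0%N => n _; rewrite ssubE subrr; apply: in_qM0.
Qed.

Lemma approx x k : EH x -> exists d, Dom d /\ exists z, EH z /\ ceq s (ssub x d) (sscale (q k) z).
Proof.
move=> [cx [[y [hy [cy ey]]] [h [hh eh]]]].
have [d0 [hd0 ed0]] := hpiDom hh.
have [y0 [hy0 [cy0 ey0]]] := hDomE'H' hd0.
pose u := ssub y y0.
have hu n : E' (u n) by rewrite /u /ssub /sadd /sscale; apply: E'D => //; apply: E'Z.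
have cu : cauchy s u := cauchyD cy (cauchyZ (-1) cy0).
have [N hN] := cu k.
have hA : forall n, exists a, E' a /\ ((N <= n)%N -> u n - u N = q k *: a).
  move=> n; case: (leqP N n) => hn.
    have [w ew] := hN n N hn (leqnn N).
    have hE := E'D (hu n) (E'Z (-1) (hu N)).
    rewrite scaleN1r in hE.
    have [a [ha ea]] := summand_pure hE' hE ew.
    by exists a.
  by exists 0; split; [apply: E'0 | move=> h'; lia].
have [A hAp] := choice_nat hA.
pose z := fun n => (A n, 0 : H).
pose d := sadd d0 (sconst (u N, 0 : H)).
exists d; split; first by apply: DomD => //; apply: hE'Dom; apply: hu.
exists z; split.
  have cA : cauchy s A.
    move=> j.
    have [m1 hm1] := qS_in_S hS k; have [m2 hm2] := qS_in_S hS j.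
    have [p hp] := hS.2 m1 m2.
    have [N' hN'] := cu p.+1.
    exists (maxn N N') => n m hn hm.
    have hnN : (N <= n)%N by apply: leq_trans hn; rewrite leq_maxl.
    have hmN : (N <= m)%N by apply: leq_trans hm; rewrite leq_maxl.
    have hnN' : (N' <= n)%N by apply: leq_trans hn; rewrite leq_maxr.
    have hmN' : (N' <= m)%N by apply: leq_trans hm; rewrite leq_maxr.
    have [w ew] := hN' n m hnN' hmN'.
    have e1 : u n - u m = q k *: (A n - A m).
      by rewrite scalerBr -((hAp n).2 hnN) -((hAp m).2 hmN) zm_sub3.
    exists (q p *: w).
    have h0 : s m1 *: (A n - A m - q j *: (q p *: w)) = 0.
      rewrite -hm1 scalerBr -e1 ew qSS -hp -hm1 -hm2 !scalerA.
      by rewrite [q k * (q j * q p)]mulrA [q k * q j * q p]mulrC subrr.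
    apply/eqP; rewrite -subr_eq0; apply/eqP. move: h0; apply: hEtf.
  split; first by apply: cauchy_pair; [exact: cA | exact: (cauchy_const s (0 : H))].
  split.
    by exists A; split; [move=> n; case: (hAp n) | split; [exact: cA | exact: ceq_refl]].
  by exists 0; split; [exact: H'0 | exact: ceq_refl].
apply: ceq_pair.
  apply: ceq_trans (_ : ceq s _ (ssub (fun n => (x n).1) (sadd (fun n => (d0 n).1) (sconst (u N))))) _.
    by apply: ceq_pt => n; rewrite !ssubE.
  apply: ceq_trans (ceq_ssub ey (ceqD ey0 (ceq_refl s _))) _.
  apply: ceq_ev; exists N => n hn.
  have eu : u n = y n - y0 n := ssubE y y0 n.
  by rewrite /sscale /= -((hAp n).2 hn) ssubE /sadd /sconst eu opprD addrA.
apply: ceq_trans (_ : ceq s _ (ssub (fun n => (x n).2) (sadd (fun n => (d0 n).2) (sconst 0)))) _.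
  by apply: ceq_pt => n; rewrite !ssubE.
apply: ceq_trans (ceq_ssub eh (ceqD ed0 (ceq_refl s _))) _.
apply: ceq_pt => n.
by rewrite ssubE /sadd /sconst addr0 subrr /sscale /= scaler0.
Qed.

Lemma Good_exists x : EH x -> exists v, Good x v.
Proof.
move=> hx.
have [D hD] := choice_nat (fun k => approx k hx).
have hcons : forall k, evq s k (fun m => phi (D k.+1) m - phi (D k) m).
  move=> k; case: (hD k) => hdk [zk [hzk ek]]; case: (hD k.+1) => hdk1 [zk1 [hzk1 ek1]].
  apply: (evq_ext (ssubE _ _)).
  apply: (key hdk1 hdk (EH_sub hzk (EH_scale (s k) hzk1))).
  apply: ceq_trans (_ : ceq s _ (ssub (ssub x (D k)) (ssub x (D k.+1)))) _.
    by apply: ceq_pt => n; rewrite !ssubE zm_sub2.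
  apply: ceq_trans (ceq_ssub ek ek1) _.
  by apply: ceq_pt => n; rewrite /sscale !ssubE /sscale qSS scalerBr scalerA.
have [v [cv hv]] := @diag _ s _ (fun k => phi (D k)) (fun k => phi_cauchy (hD k).1) hcons.
exists v; split => // k; case: (hD k) => hdk hz.
exists (D k); split => //; split => //.
by apply: evq_ext (hv k) => n; rewrite ssubE.
Qed.

Lemma Good_psi psi x : chom s EH psi -> (forall d, Dom d -> ceq s (psi d) (phi d)) ->
  EH x -> Good x (psi x).
Proof.
move=> hpsi hag hx; split; first by case: hpsi => h _; apply: h.
move=> k; have [d [hd [z [hz e]]]] := approx k hx.
exists d; split => //; split; first by exists z.
have [_ [hres [hadd hsc]]] := hpsi.
apply: (@ceq_scale_evq _ _ _ _ _ (psi z)).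
apply: ceq_trans (_ : ceq s _ (ssub (psi x) (psi d))) _.
  by apply: ceq_ssub; [exact: ceq_refl | exact: ceq_sym (hag d hd)].
apply: ceq_trans (ceq_sym (chom_sub hpsi hx (EH_scale _ (EH_Dom hd)) (EH_Dom hd))) _.
apply: ceq_trans (hres _ _ (EH_sub hx (EH_Dom hd)) (EH_scale _ hz) e) _.
exact: hsc.
Qed.

Lemma main_exists : exists phihat : (nat -> E * H) -> (nat -> E * H),
  chom s EH phihat /\ (forall d, Dom d -> ceq s (phihat d) (phi d)) /\
  (forall psi : (nat -> E * H) -> (nat -> E * H),
     chom s EH psi -> (forall d, Dom d -> ceq s (psi d) (phi d)) ->
     forall x, EH x -> ceq s (psi x) (phihat x)).
Proof.
pose ph := fun x => epsilon (inhabits (fun _ : nat => (0 : E * H))) (Good x).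
have hph : forall x, EH x -> Good x (ph x).
  by move=> x hx; apply: epsilon_spec; apply: Good_exists.
exists ph; split; [|split].
- split; first by move=> x hx; exact: (hph x hx).1.
  split; first by move=> x y hx hy e; apply: Good_uniq (Good_ceq (hph x hx) hy e) (hph y hy).
  split; first by move=> x y hx hy; apply: Good_uniq (hph _ (EH_add hx hy)) (Good_add (hph x hx) (hph y hy)).
  by move=> r x hx; apply: Good_uniq (hph _ (EH_scale r hx)) (Good_scale r (hph x hx)).
- by move=> d hd; apply: Good_uniq (hph _ (EH_Dom hd)) (Good_Dom hd).
- by move=> psi hpsi hag x hx; apply: Good_uniq (Good_psi hpsi hag hx) (hph x hx).
Qed.

End Main.

(* B = E (+) H is the product module E * H, so \hat B = \hat E (+) \hat H; an
   element of \hat B is represented by a Cauchy sequence x : nat -> E * H,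
   pi x = (fun n => (x n).2), and H is embedded in \hat H by constants. *)
Theorem lemma4p3
  (* standing setting on R and S = {s n} *)
  (R : comPzRingType) (s : nat -> R)
  (hS : mult_closed_seq s)
  (hRred : S_reduced s R^o) (hRtf : S_torsion_free s R^o)
  (hRctf : cotorsion_free s R^o)
  (* lambda = |L| infinite, lambda^aleph0 = lambda > |R| *)
  (L : eqType)
  (hLinf : exists f : nat -> L, injective f)
  (hLpow : exists f : (nat -> L) -> L, bijective f)
  (hRL : card_lt R L)
  (* E free with basis T = finite sequences in lambda *)
  (E : lmodType R) (b : seq L -> E) (hb : free_basis b)
  (* H cotorsion-free with |H| < lambda *)
  (H : lmodType R) (hH : cotorsion_free s H) (hHL : card_lt H L)
  (* H' pure in H, E' direct summand of E *)
  (H' : H -> Prop) (hH' : pure_submod s H')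
  (E' : E -> Prop) (hE' : direct_summand E')
  (* Dom(phi), a submodule of \hat B *)
  (Dom : (nat -> E * H) -> Prop) (hDom : csubmod s Dom)
  (* E' \subseteq Dom(phi) *)
  (hE'Dom : forall e, E' e -> Dom (sconst (e, 0)))
  (* E' pure in Dom(phi) *)
  (hE'pure : forall n e, E' e ->
      (exists d, Dom d /\ ceq s (sconst (e, 0)) (sscale (s n) d)) ->
      exists e', E' e' /\ e = s n *: e')
  (* Dom(phi) \subseteq \hat E (+) H' *)
  (hDomEH' : forall d, Dom d ->
      exists h, H' h /\ ceq s (fun n => (d n).2) (sconst h))
  (* Dom(phi) pure in \hat E (+) H' *)
  (hDompure : forall n d, Dom d ->
      (exists x, cauchy s x /\ (exists h, H' h /\ ceq s (fun k => (x k).2) (sconst h))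
                 /\ ceq s d (sscale (s n) x)) ->
      exists d', Dom d' /\ ceq s d (sscale (s n) d'))
  (* pi(Dom(phi)) = H' *)
  (hpiDom : forall h, H' h -> exists d, Dom d /\ ceq s (fun n => (d n).2) (sconst h))
  (* Dom(phi) \subseteq \hat{E'} (+) H', implicit in "extension to \hat{E'} (+) H'" *)
  (hDomE'H' : forall d, Dom d ->
      exists y : nat -> E, (forall n, E' (y n)) /\ cauchy s y /\
                           ceq s (fun n => (d n).1) y)
  (* phi : Dom(phi) -> \hat E (+) H, an R-homomorphism *)
  (phi : (nat -> E * H) -> (nat -> E * H))
  (hphi : chom s Dom phi)
  (hphiH : forall d, Dom d -> exists h, ceq s (fun n => (phi d n).2) (sconst h)) :
  let E'H' := fun x : nat -> E * H =>
      cauchy s x /\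
      (exists y : nat -> E, (forall n, E' (y n)) /\ cauchy s y /\
                            ceq s (fun n => (x n).1) y) /\
      (exists h, H' h /\ ceq s (fun n => (x n).2) (sconst h)) in
  exists phihat : (nat -> E * H) -> (nat -> E * H),
    chom s E'H' phihat /\
    (forall d, Dom d -> ceq s (phihat d) (phi d)) /\
    (forall psi : (nat -> E * H) -> (nat -> E * H),
       chom s E'H' psi -> (forall d, Dom d -> ceq s (psi d) (phi d)) ->
       forall x, E'H' x -> ceq s (psi x) (phihat x)).
Proof.
move=> E'H'.
exact: (main_exists hS (free_tf hb hRtf) hH'.1 hE' hDom hE'Dom hDomEH' hDompure
  hpiDom hDomE'H' hphi).
Qed.
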